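(* Let $G=(V,E)$ be an atomic bispanning graph, $v\in V$ a vertex of degree $3$ with adjacent vertices $x,y,z$ joined to $v$ by edges $e_x,e_y,e_z$, and let $G_{x,y},G_{x,z},G_{y,z}$ be the reduction graphs. Then $$V_{\tau(G)}=\rho_{e_{x,y},z}(V_{\tau(G_{x,y})})\,\dot\cup\,\rho_{e_{x,z},y}(V_{\tau(G_{x,z})})\,\dot\cup\,\rho_{e_{y,z},x}(V_{\tau(G_{y,z})}),$$ where for $(a,b)\in\{(x,y),(x,z),(y,z)\}$ and $c$ the remaining neighbour, $\rho_{e_{a,b},c}:V_{\tau(G_{a,b})}\to V_{\tau(G)}$ maps $(S,T)$ to $(S-e_{a,b}+e_a+e_b,\;T+e_c)$ if $e_{a,b}\in S$ and to $(S+e_c,\;T-e_{a,b}+e_a+e_b)$ if $e_{a,b}\in T$.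
   Context: Graphs are finite, undirected, may have parallel edges, no loops; $X+a=X\cup\{a\}$, $X-a=X\setminus\{a\}$. A spanning tree is $T\subseteq E$ with $(V,T)$ connected and acyclic; $G$ is bispanning if $E$ is the union of two disjoint spanning trees; atomic if its only bispanning subgraphs are itself and single vertices. For a bispanning graph $H$ with edge set $F$, $V_{\tau(H)}$ is the set of ordered pairs $(S,T)$ of disjoint spanning trees of $H$ with $S\cup T=F$. The reduction graph $G_{a,b}$ has vertex set $V-v$ and edge set $E-e_x-e_y-e_z+e_{a,b}$, where $e_{a,b}$ is a new edge with ends $a,b$ (it is bispanning). *)

(* Defs.v *)
(* Multigraphs: vertex type V, edge type E (finTypes),
   each edge e has endpoints src e, dst e (orientation irrelevant).
   A (sub)graph is given by a vertex set VS and an edge set ES. *)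
From mathcomp Require Import all_boot.
Set Implicit Arguments. Unset Strict Implicit. Unset Printing Implicit Defensive.

Section Graphs.
Variables (V E : finType) (src dst : E -> V).

Definition joins (e : E) (u w : V) : bool :=
  ((src e == u) && (dst e == w)) || ((src e == w) && (dst e == u)).

Definition adj (T : {set E}) : rel V := fun u w => [exists e in T, joins e u w].

Definition connectedb (VS : {set V}) (T : {set E}) : bool :=
  [forall u in VS, forall w in VS, connect (adj T) u w].

(* (.,T) is acyclic: no edge e of T lies on a cycle, i.e. the ends of e
   are not joined by a path in T - e (a loop is itself a cycle). *)
Definition acyclicb (T : {set E}) : bool :=
  [forall e in T, ~~ connect (adj (T :\ e)) (src e) (dst e)].

Definition spanning_tree (VS : {set V}) (ES T : {set E}) : bool :=
  [&& T \subset ES, connectedb VS T & acyclicb T].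

Definition Vtau (VS : {set V}) (ES : {set E}) : {set {set E} * {set E}} :=
  [set p : {set E} * {set E} |
     [&& spanning_tree VS ES p.1, spanning_tree VS ES p.2,
         [disjoint p.1 & p.2] & p.1 :|: p.2 == ES]].

Definition bispanning (VS : {set V}) (ES : {set E}) : Prop :=
  exists S T : {set E},
    [/\ spanning_tree VS ES S, spanning_tree VS ES T,
        [disjoint S & T] & S :|: T = ES].

Definition subgraph (VS : {set V}) (ES : {set E}) (VS' : {set V}) (ES' : {set E}) : Prop :=
  [/\ VS' \subset VS, ES' \subset ES, VS' != set0 &
      forall e, e \in ES' -> (src e \in VS') && (dst e \in VS')].

Definition atomic (VS : {set V}) (ES : {set E}) : Prop :=
  forall VS' ES', subgraph VS ES VS' ES' -> bispanning VS' ES' ->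
    (VS' = VS /\ ES' = ES) \/ #|VS'| = 1.

End Graphs.

(* Reduction graph G_{a,b}: vertex set V - v, edge type option E where
   None is the new edge e_{a,b} with ends a, b; edges Some e for e not in
   {e_x,e_y,e_z}. *)
Section Reduction.
Variables (V E : finType) (src dst : E -> V).

Definition red_src (a : V) (o : option E) : V :=
  if o is Some e then src e else a.
Definition red_dst (b : V) (o : option E) : V :=
  if o is Some e then dst e else b.
Definition red_vertices (v : V) : {set V} := [set: V] :\ v.
Definition red_edges (ex ey ez : E) : {set option E} :=
  [set o : option E | if o is Some e then e \notin [set ex; ey; ez] else true].

Definition Vtau_red (v a b : V) (ex ey ez : E) :=
  Vtau (red_src a) (red_dst b) (red_vertices v) (red_edges ex ey ez).

Definition rho (ea eb ec : E) (p : {set option E} * {set option E}) :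
    {set E} * {set E} :=
  let S := [set e | Some e \in p.1] in
  let T := [set e | Some e \in p.2] in
  if None \in p.1 then (S :|: [set ea; eb], ec |: T)
  else (ec |: S, T :|: [set ea; eb]).

Definition rho_image (v a b : V) (ex ey ez ea eb ec : E) : {set {set E} * {set E}} :=
  [set rho ea eb ec p | p in Vtau_red v a b ex ey ez].

End Reduction.

(* Main.v *)
Require Import Defs.
From mathcomp Require Import all_boot.
Set Implicit Arguments. Unset Strict Implicit. Unset Printing Implicit Defensive.

Lemma mk_disj (T : finType) (A B : {set T}) :
  (forall x, x \in A -> x \in B -> False) -> [disjoint A & B].
Proof.
move=> H; rewrite disjoint_subset; apply/subsetP => x xA; rewrite inE.
by apply/negP => xB; exact: H xA xB.
Qed.

Section Gen.
Variables (V E : finType) (src dst : E -> V).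
Local Notation joins := (joins src dst).
Local Notation adj := (adj src dst).

Lemma joinsC e u w : joins e u w = joins e w u.
Proof. by rewrite /Defs.joins orbC. Qed.

Lemma joins_se e : joins e (src e) (dst e).
Proof. by rewrite /Defs.joins !eqxx. Qed.

Lemma adj_sym (T : {set E}) : symmetric (adj T).
Proof.
move=> u w; rewrite /Defs.adj; apply/existsP/existsP => -[e /andP[eT j]];
  by exists e; rewrite eT /= joinsC.
Qed.

Lemma conn_sym (T : {set E}) u w : connect (adj T) u w = connect (adj T) w u.
Proof. exact: (sym_connect_sym (adj_sym T)). Qed.

Lemma edge_conn (T : {set E}) e u w : e \in T -> joins e u w -> connect (adj T) u w.
Proof. by move=> eT j; apply: connect1; apply/existsP; exists e; rewrite eT. Qed.

Lemma conn_joins (T : {set E}) e u w :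
  joins e u w -> connect (adj T) (src e) (dst e) = connect (adj T) u w.
Proof. by case/orP=> /andP[/eqP-> /eqP->] //; rewrite conn_sym. Qed.

Lemma hom_joins (r : rel V) (f : V -> V) e u w : symmetric r -> joins e u w ->
  connect r (f u) (f w) -> connect r (f (src e)) (f (dst e)).
Proof.
by move=> sr; case/orP=> /andP[/eqP-> /eqP->] //; rewrite (sym_connect_sym sr).
Qed.

Lemma adj_hom (r : rel V) (f : V -> V) (T : {set E}) : symmetric r ->
  (forall e, e \in T -> connect r (f (src e)) (f (dst e))) ->
  forall u w, connect (adj T) u w -> connect r (f u) (f w).
Proof.
move=> sr H u w /connectP [p pth ->]; elim: p u pth => [|x p IH] u /=.
  by rewrite connect0.
case/andP => /existsP [e /andP [eT j]] /IH h; apply: (connect_trans _ h).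
case/orP: j => /andP[/eqP <- /eqP <-]; first exact: H.
by rewrite (sym_connect_sym sr); exact: H.
Qed.

Lemma conn_isolated (r : rel V) u w : (forall w', ~~ r u w') -> connect r u w -> w = u.
Proof.
move=> H /connectP [[|y p] /= pth ->] //.
by case/andP: pth; rewrite (negbTE (H y)).
Qed.

Lemma conn_of (VS : {set V}) (T : {set E}) u w : connectedb src dst VS T -> u \in VS -> w \in VS ->
  connect (adj T) u w.
Proof. by move/forall_inP => H uV wV; move/forall_inP: (H u uV); apply. Qed.

Lemma mk_conn (VS : {set V}) (T : {set E}) : (forall u w, u \in VS -> w \in VS -> connect (adj T) u w) ->
  connectedb src dst VS T.
Proof. by move=> H; apply/forall_inP => u uV; apply/forall_inP => w wV; apply: H. Qed.

Lemma acy_of (T : {set E}) e : acyclicb src dst T -> e \in T ->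
  ~~ connect (adj (T :\ e)) (src e) (dst e).
Proof. by move/forall_inP; apply. Qed.

Lemma mk_acy (T : {set E}) : (forall e, e \in T -> ~~ connect (adj (T :\ e)) (src e) (dst e)) ->
  acyclicb src dst T.
Proof. by move=> H; apply/forall_inP. Qed.

End Gen.

Section Core.
Variables (V E : finType) (src dst : E -> V) (v a b c : V) (ea eb ec : E) (K : {set E}).
Hypotheses (nl : forall e, src e != dst e)
 (Ha : joins src dst ea v a) (Hb : joins src dst eb v b) (Hc : joins src dst ec v c)
 (dab : ea != eb) (dac : ea != ec) (dbc : eb != ec)
 (touch : forall e, ((src e == v) || (dst e == v)) = (e \in [set ea; eb; ec]))
 (HK : forall e, (e \in K) = (e \in [set ea; eb; ec])).

Local Notation adjG := (adj src dst).
Local Notation adjR := (adj (red_src src a) (red_dst dst b)).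
Local Notation RE := [set o : option E | if o is Some e then e \notin K else true].
Local Notation stR := (spanning_tree (red_src src a) (red_dst dst b) (red_vertices v) RE).
Local Notation stG := (spanning_tree src dst [set: V] [set: E]).

Definition f_to (x u : V) := if u == v then x else u.

Lemma f_v x : f_to x v = x. Proof. by rewrite /f_to eqxx. Qed.
Lemma f_fix x u : u != v -> f_to x u = u. Proof. by rewrite /f_to => /negbTE ->. Qed.

Lemma nK_fix x e : e \notin K -> f_to x (src e) = src e /\ f_to x (dst e) = dst e.
Proof.
rewrite HK -touch => /norP [h1 h2]; by rewrite !f_fix.
Qed.

Lemma neq_v e w : joins src dst e v w -> w != v.
Proof.
apply: contraTneq => ->; rewrite /joins orbb; apply/negP => /andP[/eqP h1 /eqP h2].
by move: (nl e); rewrite h1 h2 eqxx.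
Qed.

Lemma av : a != v. Proof. exact: neq_v Ha. Qed.
Lemma bv : b != v. Proof. exact: neq_v Hb. Qed.
Lemma cv : c != v. Proof. exact: neq_v Hc. Qed.

Lemma inRV u : (u \in red_vertices v) = (u != v).
Proof. by rewrite /red_vertices !inE andbT. Qed.

Lemma None_joins : joins (red_src src a) (red_dst dst b) None a b.
Proof. by rewrite /joins /= !eqxx. Qed.

Lemma inRE e : (Some e \in RE) = (e \notin K).
Proof. by rewrite inE. Qed.

Lemma eaK : ea \in K. Proof. by rewrite HK !inE eqxx. Qed.
Lemma ebK : eb \in K. Proof. by rewrite HK !inE eqxx orbT. Qed.
Lemma ecK : ec \in K. Proof. by rewrite HK !inE eqxx !orbT. Qed.

Definition symR (T : {set option E}) := adj_sym (red_src src a) (red_dst dst b) T.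

Lemma fwdS (S' : {set option E}) : stR S' -> None \in S' ->
  stG ([set e | Some e \in S'] :|: [set ea; eb]).
Proof.
case/and3P => sub con acy NS.
set S := _ :|: _.
have inS e : (e \in S) = (Some e \in S') || (e == ea) || (e == eb).
  by rewrite !inE orbA.
have eaS : ea \in S by rewrite inS eqxx orbT.
have ebS : eb \in S by rewrite inS eqxx !orbT.
have S0K e : Some e \in S' -> e \notin K by move/(subsetP sub); rewrite inRE.
have h1 u w : u != v -> w != v -> connect (adjG S) u w.
  move=> uv wv; have hu : u \in red_vertices v by rewrite inRV.
  have hw : w \in red_vertices v by rewrite inRV.
  have := conn_of con hu hw.
  apply: (adj_hom (f := id) (adj_sym _ _ _)) => -[e|] /= oS.
    by apply: (edge_conn (e := e)); [rewrite inS oS | exact: joins_se].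
  apply: (connect_trans (y := v)).
    by apply: (edge_conn (e := ea)) => //; rewrite joinsC.
  exact: (edge_conn (e := eb)).
have h2 u : connect (adjG S) v u.
  case: (eqVneq u v) => [->|uv]; first exact: connect0.
  apply: (connect_trans (y := a)); first exact: (edge_conn (e := ea)).
  exact: h1 av uv.
apply/and3P; split; first exact: subsetT.
  apply: mk_conn => u w _ _.
  case: (eqVneq u v) => [->|uv]; first exact: h2.
  case: (eqVneq w v) => [->|wv]; first by rewrite conn_sym.
  exact: h1.
apply: mk_acy => e eS.
case: (eqVneq e ea) => [-> | nea].
  rewrite (conn_joins _ Ha); apply/negP => C.
  have := acy_of acy NS; rewrite /= => /negP; apply.
  rewrite (sym_connect_sym (symR _)).
  suff : connect (adj (red_src src a) (red_dst dst b) (S' :\ None)) (f_to b v) (f_to b a)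
    by rewrite f_v f_fix ?av.
  move: C; apply: (adj_hom (symR _)) => e' /setD1P [ne' e'S].
  move: e'S; rewrite inS -orbA => /or3P [Se' | /eqP e'a | /eqP ->].
  - have [-> ->] := nK_fix b (S0K _ Se').
    by apply: (edge_conn (e := Some e')); [rewrite !inE Se' | exact: joins_se].
  - by rewrite e'a eqxx in ne'.
  - by apply: (hom_joins (symR _) Hb); rewrite f_v f_fix ?bv // connect0.
case: (eqVneq e eb) => [-> | neb].
  rewrite (conn_joins _ Hb); apply/negP => C.
  have := acy_of acy NS; rewrite /= => /negP; apply.
  suff : connect (adj (red_src src a) (red_dst dst b) (S' :\ None)) (f_to a v) (f_to a b)
    by rewrite f_v f_fix ?bv // (sym_connect_sym (symR _)).
  move: C; apply: (adj_hom (symR _)) => e' /setD1P [ne' e'S].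
  move: e'S; rewrite inS -orbA => /or3P [Se' | /eqP -> | /eqP e'b].
  - have [-> ->] := nK_fix a (S0K _ Se').
    by apply: (edge_conn (e := Some e')); [rewrite !inE Se' | exact: joins_se].
  - by apply: (hom_joins (symR _) Ha); rewrite f_v f_fix ?av // connect0.
  - by rewrite e'b eqxx in ne'.
have Se : Some e \in S' by move: eS; rewrite inS (negbTE nea) (negbTE neb) !orbF.
apply/negP => C; have := acy_of acy Se; rewrite /= => /negP; apply.
have [<- <-] := nK_fix a (S0K _ Se).
move: C; apply: (adj_hom (symR _)) => e' /setD1P [ne' e'S].
move: e'S; rewrite inS -orbA => /or3P [Se' | /eqP -> | /eqP ->].
- have [-> ->] := nK_fix a (S0K _ Se').
  by apply: (edge_conn (e := Some e')); [rewrite !inE Se' andbT | exact: joins_se].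
- by apply: (hom_joins (symR _) Ha); rewrite f_v f_fix ?av // connect0.
- apply: (hom_joins (symR _) Hb); rewrite f_v f_fix ?bv //.
  by apply: (edge_conn (e := None)); [rewrite !inE NS | exact: None_joins].
Qed.

Lemma fwdT (T' : {set option E}) : stR T' -> None \notin T' ->
  stG (ec |: [set e | Some e \in T']).
Proof.
case/and3P => sub con acy NT.
set T := _ |: _.
have inT e : (e \in T) = (e == ec) || (Some e \in T') by rewrite !inE.
have ecT : ec \in T by rewrite inT eqxx.
have T0K e : Some e \in T' -> e \notin K by move/(subsetP sub); rewrite inRE.
have h1 u w : u != v -> w != v -> connect (adjG T) u w.
  move=> uv wv; have hu : u \in red_vertices v by rewrite inRV.
  have hw : w \in red_vertices v by rewrite inRV.
  have := conn_of con hu hw.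
  apply: (adj_hom (f := id) (adj_sym _ _ _)) => -[e|] /= oT.
    by apply: (edge_conn (e := e)); [rewrite inT oT orbT | exact: joins_se].
  by rewrite oT in NT.
have h2 u : connect (adjG T) v u.
  case: (eqVneq u v) => [->|uv]; first exact: connect0.
  apply: (connect_trans (y := c)); first exact: (edge_conn (e := ec)).
  exact: h1 cv uv.
apply/and3P; split; first exact: subsetT.
  apply: mk_conn => u w _ _.
  case: (eqVneq u v) => [->|uv]; first exact: h2.
  case: (eqVneq w v) => [->|wv]; first by rewrite conn_sym.
  exact: h1.
apply: mk_acy => e eS.
case: (eqVneq e ec) => [-> | nec].
  rewrite (conn_joins _ Hc); apply/negP => /conn_isolated C.
  suff : c = v by move/eqP; rewrite (negbTE cv).
  apply: C => w'; apply/existsP => -[e' /andP [/setD1P [ne' e'T] j]].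
  move: e'T; rewrite inT (negbTE ne') /= => /T0K.
  by rewrite HK -touch; case/orP: j => /andP [/eqP j1 /eqP j2]; rewrite j1 j2 eqxx ?orbT.
have Se : Some e \in T' by move: eS; rewrite inT (negbTE nec).
apply/negP => C; have := acy_of acy Se; rewrite /= => /negP; apply.
have [<- <-] := nK_fix c (T0K _ Se).
move: C; apply: (adj_hom (symR _)) => e' /setD1P [ne' e'S].
move: e'S; rewrite inT => /orP [/eqP -> | Se'].
- by apply: (hom_joins (symR _) Hc); rewrite f_v f_fix ?cv // connect0.
- have [-> ->] := nK_fix c (T0K _ Se').
  by apply: (edge_conn (e := Some e')); [rewrite !inE Se' andbT | exact: joins_se].
Qed.

Definition bS (S : {set E}) : {set option E} :=
  [set o | if o is Some e then [&& e \in S, e != ea & e != eb] else true].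
Definition bT (T : {set E}) : {set option E} :=
  [set o | if o is Some e then (e \in T) && (e != ec) else false].

Lemma backS S : stG S -> ea \in S -> eb \in S -> ec \notin S -> stR (bS S).
Proof.
case/and3P => _ con acy eaS ebS ecS.
have inS' e : (Some e \in bS S) = [&& e \in S, e != ea & e != eb] by rewrite inE.
have NS : None \in bS S by rewrite inE.
have S'K e : Some e \in bS S -> e \notin K.
  rewrite inS' HK !inE => /and3P [eS /negbTE -> /negbTE ->] /=.
  by apply/eqP => E1; move: ecS; rewrite -E1 eS.
apply/and3P; split.
- apply/subsetP => -[e|] oS; last by rewrite inE.
  by rewrite inRE; apply: S'K.
- apply: mk_conn => u w; rewrite !inRV => uv wv.
  have := conn_of con (in_setT u) (in_setT w).
  rewrite -{2}(f_fix a uv) -{2}(f_fix a wv).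
  apply: (adj_hom (symR _)) => e eS.
  case: (eqVneq e ea) => [-> | nea].
    by apply: (hom_joins (symR _) Ha); rewrite f_v f_fix ?av // connect0.
  case: (eqVneq e eb) => [-> | neb].
    apply: (hom_joins (symR _) Hb); rewrite f_v f_fix ?bv //.
    exact: (edge_conn (e := None) NS None_joins).
  have Se : Some e \in bS S by rewrite inS' eS nea neb.
  have [-> ->] := nK_fix a (S'K _ Se).
  exact: (edge_conn (e := Some e) Se (joins_se _ _ _)).
apply: mk_acy => -[e|] oS /=.
  move: (oS); rewrite inS' => /and3P [eS nea neb].
  apply/negP => C; have := acy_of acy eS; rewrite /= => /negP; apply.
  move: C; apply: (adj_hom (f := id) (adj_sym _ _ _)) => -[e'|] /setD1P [ne' e'S] /=.
    move: e'S; rewrite inS' => /and3P [e'S _ _].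
    apply: (edge_conn (e := e')); last exact: joins_se.
    by rewrite !inE e'S andbT; apply: contraNneq ne' => ->.
  apply: (connect_trans (y := v)).
    by apply: (edge_conn (e := ea)); [rewrite !inE eaS andbT eq_sym | rewrite joinsC].
  by apply: (edge_conn (e := eb)); [rewrite !inE ebS andbT eq_sym |].
apply/negP => C; have := acy_of acy eaS; rewrite /= => /negP; apply.
rewrite (conn_joins _ Ha) conn_sym.
apply: (connect_trans (y := b)).
  move: C; apply: (adj_hom (f := id) (adj_sym _ _ _)) => -[e'|] /setD1P [ne' e'S] //=.
  move: e'S; rewrite inS' => /and3P [e'S ne'a _].
  by apply: (edge_conn (e := e')); [rewrite !inE e'S andbT | exact: joins_se].
by apply: (edge_conn (e := eb)); [rewrite !inE ebS andbT eq_sym | rewrite joinsC].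
Qed.

Lemma backT T : stG T -> ec \in T -> ea \notin T -> eb \notin T -> stR (bT T).
Proof.
case/and3P => _ con acy ecT eaT ebT.
have inT' e : (Some e \in bT T) = (e \in T) && (e != ec) by rewrite inE.
have NT : None \notin bT T by rewrite inE.
have T'K e : Some e \in bT T -> e \notin K.
  rewrite inT' HK !inE => /andP [eT /negbTE ->]; rewrite orbF.
  by apply/norP; split; apply: contraTneq eT => ->.
apply/and3P; split.
- apply/subsetP => -[e|] oS; last by rewrite inE.
  by rewrite inRE; apply: T'K.
- apply: mk_conn => u w; rewrite !inRV => uv wv.
  have := conn_of con (in_setT u) (in_setT w).
  rewrite -{2}(f_fix c uv) -{2}(f_fix c wv).
  apply: (adj_hom (symR _)) => e eT.
  case: (eqVneq e ec) => [-> | nec].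
    by apply: (hom_joins (symR _) Hc); rewrite f_v f_fix ?cv // connect0.
  have Se : Some e \in bT T by rewrite inT' eT nec.
  have [-> ->] := nK_fix c (T'K _ Se).
  exact: (edge_conn (e := Some e) Se (joins_se _ _ _)).
apply: mk_acy => -[e|] oS /=; last by rewrite oS in NT.
move: (oS); rewrite inT' => /andP [eT nec].
apply/negP => C; have := acy_of acy eT; rewrite /= => /negP; apply.
move: C; apply: (adj_hom (f := id) (adj_sym _ _ _)) => -[e'|] /setD1P [ne' e'S] /=.
  move: e'S; rewrite inT' => /andP [e'T _].
  apply: (edge_conn (e := e')); last exact: joins_se.
  by rewrite !inE e'T andbT; apply: contraNneq ne' => ->.
by rewrite inE in e'S.
Qed.

Local Notation VR := (Vtau (red_src src a) (red_dst dst b) (red_vertices v) RE).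
Local Notation VG := (Vtau src dst [set: V] [set: E]).

Lemma some_edge S : stG S -> (ea \in S) || (eb \in S) || (ec \in S).
Proof.
case/and3P => _ con _; apply/negPn/negP => /norP [/norP [n1 n2] n3].
have := conn_of con (in_setT v) (in_setT a) => /conn_isolated C.
have : a = v.
  apply: C => w; apply/existsP => -[e /andP [eS j]].
  have : e \in [set ea; eb; ec].
    by rewrite -touch; case/orP: j => /andP [/eqP j1 /eqP j2]; rewrite j1 j2 eqxx ?orbT.
  rewrite !inE => /orP [/orP [] | ] /eqP E1; [move: n1 | move: n2 | move: n3]; by rewrite -E1 eS.
by move/eqP; rewrite (negbTE av).
Qed.

Lemma inVtau (VS : {set V}) (ES S T : {set E}) :
  ((S, T) \in Vtau src dst VS ES) =
  [&& spanning_tree src dst VS ES S, spanning_tree src dst VS ES T,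
      [disjoint S & T] & S :|: T == ES].
Proof. by rewrite inE. Qed.

Lemma inVtauR (S T : {set option E}) :
  ((S, T) \in VR) =
  [&& stR S, stR T, [disjoint S & T] & S :|: T == RE].
Proof. by rewrite inE. Qed.

Lemma back_pair S T : (S, T) \in VG -> ea \in S -> eb \in S -> ec \in T ->
  (S, T) \in [set rho ea eb ec p | p in VR] /\
  (T, S) \in [set rho ea eb ec p | p in VR].
Proof.
rewrite inVtau => /and4P [sS sT dST /eqP uST] eaS ebS ecT.
have ST e : (e \in S) = (e \notin T).
  case eS: (e \in S); first by rewrite (disjointFr dST eS).
  by move/setP: uST => /(_ e); rewrite !inE eS /= => ->.
have ecS : ec \notin S by rewrite ST ecT.
have eaT : ea \notin T by rewrite -ST.
have ebT : eb \notin T by rewrite -ST.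
have NS : None \in bS S by rewrite inE.
have NT : None \notin bT T by rewrite inE.
have d' : [disjoint bS S & bT T].
  apply: mk_disj => -[e|]; rewrite !inE // => /and3P [eS _ _] /andP [eT _].
  by move: eS; rewrite ST eT.
have u' : bS S :|: bT T = RE.
  apply/setP => -[e|]; rewrite !inE //= HK !inE.
  case: (eqVneq e ea) => [->|nea]; first by rewrite /= (negbTE eaT) andbF.
  case: (eqVneq e eb) => [->|neb]; first by rewrite /= !andbF (negbTE ebT).
  case: (eqVneq e ec) => [->|nec]; first by rewrite (negbTE ecS) /= andbF.
  by rewrite /= !andbT ST orNb.
have sS' := backS sS eaS ebS ecS.
have sT' := backT sT ecT eaT ebT.
have m1 : (bS S, bT T) \in VR.
  by rewrite inVtauR sS' sT' d' u' eqxx.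
have m2 : (bT T, bS S) \in VR.
  by rewrite inVtauR sS' sT' disjoint_sym d' setUC u' eqxx.
have e1 : [set e | Some e \in bS S] :|: [set ea; eb] = S.
  apply/setP => e; rewrite !inE.
  case: (eqVneq e ea) => [->|nea]; first by rewrite eaS orbT.
  case: (eqVneq e eb) => [->|neb]; first by rewrite ebS !orbT.
  by rewrite !orbF andbT.
have e2 : ec |: [set e | Some e \in bT T] = T.
  apply/setP => e; rewrite !inE.
  by case: (eqVneq e ec) => [->|nec]; rewrite ?ecT ?andbT.
split; apply/imsetP.
  by exists (bS S, bT T) => //; rewrite /rho /= NS e1 e2.
by exists (bT T, bS S) => //; rewrite /rho /= (negbTE NT) e1 e2.
Qed.

Lemma fwd_pair S' T' : (S', T') \in VR -> None \in S' ->
  ([set e | Some e \in S'] :|: [set ea; eb], ec |: [set e | Some e \in T']) \in VG.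
Proof.
rewrite inVtauR => /and4P [sS sT d /eqP u] NS.
have NT : None \notin T' by rewrite (disjointFr d NS).
have S0K e : Some e \in S' -> e \notin K by move=> h; rewrite -inRE -u inE h.
have T0K e : Some e \in T' -> e \notin K by move=> h; rewrite -inRE -u inE h orbT.
rewrite inVtau fwdS ?fwdT //=; apply/andP; split.
  apply: mk_disj => e; rewrite !inE => /orP [Se | /orP [] /eqP ->] /orP [/eqP E1 | Te].
  - by move: (S0K _ Se); rewrite E1 ecK.
  - by move: Te; rewrite (disjointFr d Se).
  - by move: dac; rewrite E1 eqxx.
  - by move: (T0K _ Te); rewrite eaK.
  - by move: dbc; rewrite E1 eqxx.
  - by move: (T0K _ Te); rewrite ebK.
apply/eqP/setP => e; rewrite !inE.
case eK: (e \in K).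
  by move: eK; rewrite HK !inE => /orP [/orP [] | ] ->; rewrite ?orbT.
have : Some e \in RE by rewrite inRE eK.
by rewrite -u inE => /orP [] ->; rewrite ?orbT.
Qed.

Lemma rho_prop p : p \in VR ->
  ((ea \in (rho ea eb ec p).1) == (eb \in (rho ea eb ec p).1)) &&
  ((ec \in (rho ea eb ec p).1) != (ea \in (rho ea eb ec p).1)).
Proof.
case: p => S' T'; rewrite inVtauR => /and4P [_ _ _ /eqP u].
have S0K e : Some e \in S' -> e \notin K by move=> h; rewrite -inRE -u inE h.
have nc : Some ec \in S' = false by apply: contraTF ecK => /S0K.
have na : Some ea \in S' = false by apply: contraTF eaK => /S0K.
have nb : Some eb \in S' = false by apply: contraTF ebK => /S0K.
rewrite /rho /=; case: ifP => NS /=; rewrite !inE !eqxx ?orbT ?nc ?na ?nb /=.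
  by rewrite [ec == ea]eq_sym [ec == eb]eq_sym (negbTE dac) (negbTE dbc).
by rewrite (negbTE dac) (negbTE dbc).
Qed.

Lemma swapVR (S T : {set option E}) : ((S, T) \in VR) = ((T, S) \in VR).
Proof. by rewrite !inVtauR disjoint_sym setUC andbCA. Qed.

Lemma swapVG (S T : {set E}) : ((S, T) \in VG) = ((T, S) \in VG).
Proof. by rewrite !inVtau disjoint_sym setUC andbCA. Qed.

Lemma core_all :
  [/\ forall S T, (S, T) \in VG -> ea \in S -> eb \in S -> ec \in T ->
        (S, T) \in [set rho ea eb ec p | p in VR] /\
        (T, S) \in [set rho ea eb ec p | p in VR],
      [set rho ea eb ec p | p in VR] \subset VG,
      forall p, p \in [set rho ea eb ec p | p in VR] ->
        ((ea \in p.1) == (eb \in p.1)) && ((ec \in p.1) != (ea \in p.1)) &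
      forall S, stG S -> (ea \in S) || (eb \in S) || (ec \in S)].
Proof.
split.
- exact: back_pair.
- apply/subsetP => _ /imsetP [[S' T'] m ->].
  case NS: (None \in S').
    by rewrite /rho /= NS; apply: fwd_pair.
  have NT : None \in T'.
    move: m; rewrite inVtauR => /and4P [_ _ _ /eqP u].
    by move/setP: u => /(_ None); rewrite !inE NS.
  rewrite /rho /= NS swapVG; apply: fwd_pair => //.
  by rewrite swapVR.
- by move=> _ /imsetP [q m ->]; apply: rho_prop.
- exact: some_edge.
Qed.

End Core.
Unset Implicit Arguments.

Theorem mainTheorem13 (V E : finType) (src dst : E -> V)
    (v x y z : V) (ex ey ez : E)
    (no_loops : forall e : E, src e != dst e)
    (G_bisp : bispanning src dst [set: V] [set: E])
    (G_atomic : atomic src dst [set: V] [set: E])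
    (xy : x != y) (xz : x != z) (yz : y != z)
    (exy : ex != ey) (exz : ex != ez) (eyz : ey != ez)
    (deg3 : forall e : E, ((src e == v) || (dst e == v)) = (e \in [set ex; ey; ez]))
    (Hex : joins src dst ex v x) (Hey : joins src dst ey v y)
    (Hez : joins src dst ez v z) :
  let A := rho_image src dst v x y ex ey ez ex ey ez in
  let B := rho_image src dst v x z ex ey ez ex ez ey in
  let C := rho_image src dst v y z ex ey ez ey ez ex in
  Vtau src dst [set: V] [set: E] = A :|: B :|: C /\
  [/\ [disjoint A & B], [disjoint A & C] & [disjoint B & C]].
Proof.
move=> A B C.
have KB e : (e \in [set ex; ey; ez]) = (e \in [set ex; ez; ey]).
  by rewrite !inE; case: (e == ex); case: (e == ey); case: (e == ez).
have KC e : (e \in [set ex; ey; ez]) = (e \in [set ey; ez; ex]).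
  by rewrite !inE; case: (e == ex); case: (e == ey); case: (e == ez).
have zy : ez != ey by rewrite eq_sym.
have yx : ey != ex by rewrite eq_sym.
have zx : ez != ex by rewrite eq_sym.
have [A1 A2 A3 A4] := core_all (K := [set ex; ey; ez]) no_loops Hex Hey Hez
  exy exz eyz deg3 (fun e => erefl).
have [B1 B2 B3 _] := core_all (K := [set ex; ey; ez]) no_loops Hex Hez Hey
  exz exy zy (fun e => etrans (deg3 e) (KB e)) KB.
have [C1 C2 C3 _] := core_all (K := [set ex; ey; ez]) no_loops Hey Hez Hex
  eyz yx zx (fun e => etrans (deg3 e) (KC e)) KC.
split.
  apply/setP => -[S T]; apply/idP/idP; last first.
    by rewrite !in_setU => /orP [/orP [] | ] m;
      [apply: (subsetP A2) | apply: (subsetP B2) | apply: (subsetP C2)].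
  move=> m; move: (m); rewrite inVtau => /and4P [sS sT dST /eqP uST].
  have ST e : (e \in S) = (e \notin T).
    case eS: (e \in S); first by rewrite (disjointFr dST eS).
    by move/setP: uST => /(_ e); rewrite !inE eS /= => ->.
  have hS := A4 _ sS; have hT := A4 _ sT.
  have TS e : (e \in T) = (e \notin S) by rewrite ST negbK.
  rewrite !TS in hT.
  rewrite !in_setU.
  case eS: (ex \in S); case fS: (ey \in S); case gS: (ez \in S);
    rewrite ?eS ?fS ?gS in hS hT => //.
  - apply/orP; left; apply/orP; left.
    by case: (A1 S T m eS fS); rewrite // TS gS.
  - apply/orP; left; apply/orP; right.
    by case: (B1 S T m eS gS); rewrite // TS fS.
  - apply/orP; right.
    have m' : (T, S) \in Vtau src dst [set: V] [set: E] by rewrite -swapVG.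
    by case: (C1 T S m'); rewrite // TS ?fS ?gS.
  - apply/orP; right.
    by case: (C1 S T m fS gS); rewrite // TS eS.
  - apply/orP; left; apply/orP; right.
    have m' : (T, S) \in Vtau src dst [set: V] [set: E] by rewrite -swapVG.
    by case: (B1 T S m'); rewrite // TS ?eS ?gS.
  - apply/orP; left; apply/orP; left.
    have m' : (T, S) \in Vtau src dst [set: V] [set: E] by rewrite -swapVG.
    by case: (A1 T S m'); rewrite // TS ?eS ?fS.
split; apply: mk_disj => p.
- move=> /A3 /andP [/eqP h1 h2] /B3 /andP [/eqP h3 h4].
  by move: h2; rewrite h3 eqxx.
- move=> /A3 /andP [/eqP h1 h2] /C3 /andP [/eqP h3 h4].
  by move: h2; rewrite h1 h3 eqxx.
- move=> /B3 /andP [/eqP h1 h2] /C3 /andP [/eqP h3 h4].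
  by move: h2; rewrite h3 h1 eqxx.
Qed.
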